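(* For every $r\geq 2$ there is a constant $C=C(r)>0$ such that the following holds. Let $H$ be an $r$-uniform hypergraph on $n$ vertices of average degree $d$, and let $p>0$. Then $$n^{r/p}\cdot\lambda_2^{(p)}(H)\geq r\,\mathrm{disc}^{+}(H)-Cd\qquad\text{and}\qquad n^{r/p}\cdot\mu^{(p)}(H)\geq r\,\mathrm{disc}(H)-Cd.$$
   Context: For an $r$-uniform hypergraph $H$ on vertex set $V$ with $|V|=n$, its adjacency map is $\tau_H(x_1,\dots,x_r)=\frac{1}{(r-1)!}\sum x_1(v_1)\cdots x_r(v_r)$, the sum over ordered tuples $(v_1,\dots,v_r)\in V^r$ with $\{v_1,\dots,v_r\}\in E(H)$. The normalized adjacency map is $\sigma_H=\tau_H-\frac{r|E(H)|}{n^r}J$ with $J(x_1,\dots,x_r)=\sum_{v_1,\dots,v_r\in V}x_1(v_1)\cdots x_r(v_r)$. With $\|x\|_p=(\sum_v|x(v)|^p)^{1/p}$, $\lambda_2^{(p)}(H)=\sup_{x\in\mathbb{R}^V,\|x\|_p=1}\sigma_H(x,\dots,x)$ and $\mu^{(p)}(H)=\sup_{\|x_1\|_p=\dots=\|x_r\|_p=1}|\sigma_H(x_1,\dots,x_r)|$. With edge density $q=|E(H)|/\binom{n}{r}$ and $e(U)$ the number of edges inside $U\subset V$, $\mathrm{disc}(U)=e(U)-q\binom{|U|}{r}$, $\mathrm{disc}^{+}(H)=\max_U\mathrm{disc}(U)$, $\mathrm{disc}(H)=\max_U|\mathrm{disc}(U)|$. The average degree is $d=r|E(H)|/n$. *)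

(* Defs.v *)
From HB Require Import structures.
From mathcomp Require Import all_boot all_order all_algebra.
From mathcomp Require Import all_classical all_reals.
From mathcomp Require Import exp.
Set Implicit Arguments. Unset Strict Implicit. Unset Printing Implicit Defensive.
Import Order.TTheory GRing.Theory Num.Theory.
Local Open Scope ring_scope.
Local Open Scope classical_set_scope.

Section Hyper.
Variables (R : realType) (V : finType) (r : nat) (E : {set {set V}}).

Definition uniform := forall e, e \in E -> #|e| = r.

Definition nV : R := #|V|%:R.

Definition tau (xs : 'I_r -> V -> R) : R :=
  (((r.-1)`!)%:R)^-1 *
  \sum_(f : {ffun 'I_r -> V} | [set f i | i : 'I_r] \in E) \prod_(i < r) xs i (f i).

Definition Jmap (xs : 'I_r -> V -> R) : R :=
  \sum_(f : {ffun 'I_r -> V}) \prod_(i < r) xs i (f i).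

Definition sigma (xs : 'I_r -> V -> R) : R :=
  tau xs - (r%:R * #|E|%:R / nV ^+ r) * Jmap xs.

Definition lpnorm (p : R) (x : V -> R) : R :=
  (\sum_(v : V) `|x v| `^ p) `^ p^-1.

Definition lambda2 (p : R) : R :=
  sup [set sigma (fun _ => x) | x in [set x : V -> R | lpnorm p x = 1]].

Definition mu (p : R) : R :=
  sup [set `|sigma xs| | xs in
        [set xs : 'I_r -> V -> R | forall i, lpnorm p (xs i) = 1]].

Definition density : R := #|E|%:R / ('C(#|V|, r))%:R.

Definition e_in (U : {set V}) : nat := #|[set e in E | e \subset U]|.

Definition disc (U : {set V}) : R := (e_in U)%:R - density * ('C(#|U|, r))%:R.

(* maximum over all U (U = set0 gives disc = 0, so seed 0 is harmless) *)
Definition discplus : R := \big[Num.max/0]_(U : {set V}) disc U.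
Definition discabs : R := \big[Num.max/0]_(U : {set V}) `|disc U|.

Definition avgdeg : R := r%:R * #|E|%:R / nV.

End Hyper.

(* Main.v *)
Require Import Defs.
From HB Require Import structures.
From mathcomp Require Import all_boot all_order all_algebra.
From mathcomp Require Import all_classical all_reals.
From mathcomp Require Import exp.
From mathcomp Require Import ring lra zify.
Import Order.TTheory GRing.Theory Num.Theory.
Set Implicit Arguments. Unset Strict Implicit. Unset Printing Implicit Defensive.
Lemma ffact_le_exp n m : (n ^_ m <= n ^ m)%N.
Proof.
elim: m => [|m IH]; first by rewrite ffactn0 expn0.
by rewrite ffactnSr expnS mulnC leq_mul // leq_subr.
Qed.

Lemma leq_expw a b e : (a <= b)%N -> (a ^ e <= b ^ e)%N.
Proof. by case: e => // e h; rewrite leq_exp2r. Qed.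

Lemma exp_le_ffact u m : ((u - m) ^ m <= u ^_ m)%N.
Proof.
elim: m u => [|m IH] u; first by rewrite ffactn0 expn0.
rewrite ffactnS expnS.
apply: leq_mul; first by apply: leq_subr.
apply: leq_trans (IH u.-1).
by apply: leq_expw; rewrite -subn1; lia.
Qed.

Lemma ffact_cross u n m : (u <= n)%N -> (u ^_ m * n ^ m <= n ^_ m * u ^ m)%N.
Proof.
move=> hun; elim: m => [|m IH]; first by rewrite !ffactn0 !expn0.
rewrite !ffactnSr !expnS.
have h1 : ((u - m) * n <= (n - m) * u)%N by nia.
have := leq_mul IH h1.
move: (u ^_ m) (n ^ m) (n ^_ m) (u ^ m) => A B C D.
move: (u - m)%N (n - m)%N => a b H.
apply: leq_trans (leq_trans H _); apply: eq_leq; ring.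
Qed.

Local Open Scope ring_scope.
Lemma powdiff (R : realFieldType) (x y N : R) k :
  0 <= y -> y <= x -> x <= N -> x ^+ k - y ^+ k <= k%:R * (x - y) * N ^+ k.-1.
Proof.
move=> y0 yx xN.
have x0 : 0 <= x by apply: le_trans yx.
rewrite subrXX mulrC [X in _ <= X]mulrAC; apply: ler_wpM2r; first by rewrite subr_ge0.
have -> : k%:R * N ^+ k.-1 = \sum_(i < k) N ^+ k.-1.
  by rewrite sumr_const card_ord mulr_natl.
apply: ler_sum => i _.
have hi : (k.-1 - i + i)%N = k.-1.
  have := ltn_ord i; case: k i => [|k] i /=; [by case: i|]; lia.
have -> : N ^+ k.-1 = N ^+ (k.-1 - i) * N ^+ i by rewrite -exprD hi.
 apply: ler_pM; rewrite ?exprn_ge0 //.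
  have N0 : 0 <= N := le_trans x0 xN.
  exact: (lerXn2r _ (x0 : x \in Num.nneg) (N0 : N \in Num.nneg) xN).
have N0 : 0 <= N := le_trans x0 xN.
exact: (lerXn2r _ (y0 : y \in Num.nneg) (N0 : N \in Num.nneg) (le_trans yx xN)).
Qed.

Lemma dens_bounds (R : realFieldType) (e n u r : nat) :
  (0 < r)%N -> (u <= n)%N -> (r <= n)%N ->
  (e%:R / ('C(n, r))%:R * ('C(u, r))%:R <= e%:R / n%:R ^+ r * u%:R ^+ r :> R) /\
  (e%:R / n%:R ^+ r * u%:R ^+ r - e%:R / ('C(n, r))%:R * ('C(u, r))%:R
     <= (r%:R) ^+ 2 * (e%:R / n%:R) :> R).
Proof.
move=> r0 un rn.
have n0 : (0 < n)%N by apply: leq_trans rn.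
have hF : (0 : R) < ('C(n, r))%:R by rewrite ltr0n bin_gt0.
have hn : (0 : R) < n%:R by rewrite ltr0n.
have hnr : (0 : R) < n%:R ^+ r by apply: exprn_gt0.
have hf : (0 < r`!)%N := fact_gt0 r.
have K1 : ('C(u, r) * n ^ r <= 'C(n, r) * u ^ r)%N.
  rewrite -(leq_pmul2r hf) mulnAC [X in (_ <= X)%N]mulnAC !bin_ffact.
  exact: ffact_cross.
have K2 : ((u - r) ^ r * 'C(n, r) <= 'C(u, r) * n ^ r)%N.
  rewrite -(leq_pmul2r hf) -mulnA mulnAC !bin_ffact.
  exact: leq_mul (exp_le_ffact u r) (ffact_le_exp n r).
set t := ('C(u, r))%:R / ('C(n, r))%:R : R.
have T1 : t <= u%:R ^+ r / n%:R ^+ r.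
  rewrite /t ler_pdivrMr // mulrAC ler_pdivlMr //.
  by rewrite -!natrX -!natrM ler_nat [X in (_ <= X)%N]mulnC.
have T2 : ((u - r)%N)%:R ^+ r / n%:R ^+ r <= t.
  rewrite /t ler_pdivrMr // mulrAC ler_pdivlMr //.
  by rewrite -!natrX -!natrM ler_nat.
have e0 : (0 : R) <= e%:R by rewrite ler0n.
have -> : e%:R / ('C(n, r))%:R * ('C(u, r))%:R = e%:R * t :> R by rewrite /t mulrA mulrAC.
have -> : e%:R / n%:R ^+ r * u%:R ^+ r = e%:R * (u%:R ^+ r / n%:R ^+ r) :> R.
  by rewrite mulrAC mulrA.
split; first by apply: ler_wpM2l.
rewrite -mulrBr.
have hw : ((u - r)%N)%:R <= (u%:R : R) by rewrite ler_nat leq_subr.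
have hd : (u%:R : R) - ((u - r)%N)%:R <= r%:R.
  by rewrite -natrB ?leq_subr // ler_nat; lia.
have un' : (u%:R : R) <= n%:R by rewrite ler_nat.
have P := @powdiff R _ _ _ r (ler0n R (u - r)) hw un'.
have P2 : (u%:R : R) ^+ r - ((u - r)%N)%:R ^+ r <= r%:R * r%:R * n%:R ^+ (r.-1).
  apply: le_trans P _; apply: ler_wpM2r; first by rewrite exprn_ge0 // ler0n.
  by apply: ler_wpM2l; rewrite ?ler0n.
have Q : (u%:R : R) ^+ r / n%:R ^+ r - t <= (r%:R) ^+ 2 / n%:R.
  apply: le_trans (_ : (u%:R ^+ r - ((u - r)%N)%:R ^+ r) / n%:R ^+ r <= _).
    by rewrite mulrBl; lra.
  rewrite ler_pdivrMr //.
  apply: le_trans P2 _.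
  case: (r) r0 => // r' _ /=.
  rewrite [n%:R ^+ r'.+1]exprS le_eqVlt; apply/orP; left; apply/eqP.
  field; exact: lt0r_neq0.
by rewrite mulrCA; apply: ler_wpM2l.
Qed.
Definition img (V : finType) (r : nat) (f : {ffun 'I_r -> V}) : {set V} :=
  [set f i | i : 'I_r].

Lemma card_img_eq (V : finType) (r : nat) (e : {set V}) :
  #|e| = r -> #|[set f : {ffun 'I_r -> V} | img f == e]| = r`!.
Proof.
move=> he.
have -> : [set f : {ffun 'I_r -> V} | img f == e] =
          [set f in ffun_on e | injectiveb f].
  apply/setP => f; rewrite !inE; apply/idP/idP.
  - move/eqP => hfe; rewrite -hfe; apply/andP; split.
      by apply/ffun_onP => i; rewrite /img; apply: imset_f.
    apply/injectiveP => i j fij.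
    have /imset_injP : #|img f| == #|'I_r|.
      by rewrite card_ord hfe he.
    by move/(_ i j); apply.
  - case/andP => /ffun_onP hon /injectiveP hinj.
    rewrite eqEcard; apply/andP; split.
      by rewrite /img; apply/fintype.subsetP => v /imsetP [i _ ->]; apply: hon.
    by rewrite /img card_imset // card_ord he.
by rewrite card_inj_ffuns_on card_ord he ffactnn.
Qed.

Lemma count_fU (V : finType) (r : nat) (E : {set {set V}}) (U : {set V}) :
  uniform r E ->
  #|[set f : {ffun 'I_r -> V} | (img f \in E) && (img f \subset U)]| = (e_in E U * r`!)%N.
Proof.
move=> hu.
rewrite -sum1_card.
rewrite (partition_big (@img V r) (fun e => (e \in E) && (e \subset U))); last first.
  by move=> f; rewrite finset.inE.
rewrite /e_in -sum1_card big_distrl /=.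
apply: eq_big => [e|e /andP [heE heU]]; first by rewrite finset.inE.
rewrite mul1n -(card_img_eq (hu e heE)) -sum1_card.
apply: eq_bigl => f; rewrite !finset.inE.
by case: (img f =P e) => [->|_]; rewrite ?heE ?heU ?andbF.
Qed.

Definition xU (R : realType) (V : finType) (U : {set V}) (c : R) : V -> R :=
  fun v => if v \in U then c else 0.

Lemma prod_xU (R : realType) (V : finType) (r : nat) (U : {set V}) (c : R)
  (f : {ffun 'I_r -> V}) :
  \prod_(i < r) xU U c (f i) = if img f \subset U then c ^+ r else 0.
Proof.
case: ifP => hs.
  rewrite (eq_bigr (fun _ => c)); last first.
    move=> i _; rewrite /xU.
    by have -> : f i \in U by apply: (fintype.subsetP hs); apply: imset_f.
  by rewrite prodr_const card_ord.
have [i hi] : exists i, f i \notin U.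
  apply/existsP; apply: contraFT hs => /existsPn H.
  apply/fintype.subsetP => v /imsetP [i _ ->].
  by have := H i; rewrite negbK.
by rewrite (bigD1 i) //= /xU (negbTE hi) mul0r.
Qed.

Lemma sum_xU (R : realType) (V : finType) (U : {set V}) (c : R) :
  \sum_v xU U c v = c *+ #|U|.
Proof. by rewrite -sumr_const [RHS]big_mkcond. Qed.

Lemma sigma_xU (R : realType) (V : finType) (r : nat) (E : {set {set V}})
  (U : {set V}) (c : R) : uniform r E -> (0 < r)%N ->
  sigma E (fun _ : 'I_r => xU U c) =
  c ^+ r * (r%:R * (e_in E U)%:R - r%:R * #|E|%:R / nV R V ^+ r * (#|U|%:R) ^+ r).
Proof.
move=> hu r0.
rewrite /sigma /tau /Jmap.
have -> : \sum_(f : {ffun 'I_r -> V} | [set f i | i : 'I_r] \in E)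
            \prod_(i < r) xU U c (f i) = c ^+ r *+ (e_in E U * r`!).
  rewrite -(count_fU U hu) -sumr_const.
  rewrite big_mkcond [RHS]big_mkcond /=; apply: eq_bigr => f _.
  rewrite prod_xU finset.inE.
  rewrite /img; set b1 := (_ \in E); set b2 := (_ \subset U); by case: b1; case: b2.
have -> : \sum_(f : {ffun 'I_r -> V}) \prod_(i<r) xU U c (f i) =
    (\sum_v xU U c v) ^+ r.
  have -> : (\sum_v xU U c v) ^+ r = \prod_(i < r) \sum_v xU U c v.
    by rewrite prodr_const card_ord.
  by rewrite (bigA_distr_bigA (fun (_ : 'I_r) v => xU U c v)).
rewrite sum_xU.
case: r r0 hu => // r' _ hu.
rewrite factS /= -[c *+ #|U|]mulr_natr -[_ *+ (_ * _)%N]mulr_natr !natrM exprMn.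
have hf : ((r'`!)%:R : R) != 0 by rewrite pnatr_eq0 -lt0n fact_gt0.
set K := _ / nV R V ^+ _.
field.
exact: hf.
Qed.

Lemma prod_norm_le1 (R : realType) (V : finType) (r : nat) (xs : 'I_r -> V -> R)
  (f : {ffun 'I_r -> V}) :
  (forall i v, `|xs i v| <= 1) -> `|\prod_(i < r) xs i (f i)| <= 1.
Proof.
move=> h; rewrite normr_prod; apply: prodr_ile1 => i _.
by rewrite normr_ge0 h.
Qed.

Lemma sum_norm_le (R : realType) (I : finType) (P : pred I) (F : I -> R) :
  (forall i, `|F i| <= 1) -> `|\sum_(i | P i) F i| <= #|I|%:R.
Proof.
move=> h; apply: (le_trans (ler_norm_sum _ _ _)).
apply: (@le_trans _ _ (\sum_(i | P i) (1 : R))); first by apply: ler_sum => i _.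
rewrite -[X in _ <= X]sumr_const; rewrite [X in _ <= X]big_mkcond /=.
rewrite big_mkcond /=; apply: ler_sum => i _.
by case: (P i) => //; rewrite finset.inE.
Qed.

Lemma sigma_bound (R : realType) (V : finType) (r : nat) (E : {set {set V}}) :
  exists M : R, forall xs : 'I_r -> V -> R, (forall i v, `|xs i v| <= 1) ->
    `|sigma E xs| <= M.
Proof.
exists (((r.-1)`!)%:R^-1 * #|{ffun 'I_r -> V}|%:R +
        `|r%:R * #|E|%:R / nV R V ^+ r| * #|{ffun 'I_r -> V}|%:R).
move=> xs h; rewrite /sigma /tau /Jmap.
apply: (le_trans (ler_normB _ _)); apply: lerD.
  rewrite normrM ger0_norm ?invr_ge0 ?ler0n //.
  apply: ler_wpM2l; first by rewrite invr_ge0 ler0n.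
  by apply: sum_norm_le => f; apply: prod_norm_le1.
rewrite normrM; apply: ler_wpM2l; first exact: normr_ge0.
have := @sum_norm_le R _ predT (fun f : {ffun 'I_r -> V} => \prod_(i < r) xs i (f i)).
by apply => f; apply: prod_norm_le1.
Qed.

Lemma lpnorm1_le1 (R : realType) (V : finType) (p : R) (x : V -> R) :
  0 < p -> lpnorm p x = 1 -> forall v, `|x v| <= 1.
Proof.
move=> p0; rewrite /lpnorm => hS v.
set S := \sum_v _ in hS.
have S0 : 0 <= S by apply: sumr_ge0 => w _; exact: powR_ge0.
have S1 : S = 1.
  have : (S `^ p^-1) `^ p = 1 by rewrite hS powR1.
  by rewrite -powRrM mulVf ?gt_eqF // powRr1.
have hv : `|x v| `^ p <= 1.
  rewrite -S1 /S (bigD1 v) //= lerDl; apply: sumr_ge0 => w _; exact: powR_ge0.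
rewrite leNgt; apply/negP => hlt.
have := gt0_ltr_powR p0 (_ : 1 \in Num.nneg) (_ : `|x v| \in Num.nneg) hlt.
rewrite powR1 ltNge hv => H.
by have := H (ler01 : 0 <= (1:R)) (normr_ge0 (x v)).
Qed.

Lemma lambda2_ge (R : realType) (V : finType) (r : nat) (E : {set {set V}})
  (p : R) (x : V -> R) :
  0 < p -> lpnorm p x = 1 -> sigma E (fun _ : 'I_r => x) <= lambda2 r E p.
Proof.
move=> p0 hx; rewrite /lambda2; apply: ub_le_sup; last by exists x.
have [M hM] := sigma_bound R r E.
exists M => y [z hz <-].
apply: le_trans (ler_norm _) _; apply: hM => _ v.
exact: lpnorm1_le1 hz v.
Qed.

Lemma mu_ge (R : realType) (V : finType) (r : nat) (E : {set {set V}})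
  (p : R) (xs : 'I_r -> V -> R) :
  0 < p -> (forall i, lpnorm p (xs i) = 1) -> `|sigma E xs| <= mu r E p.
Proof.
move=> p0 hx; rewrite /mu; apply: ub_le_sup; last by exists xs.
have [M hM] := sigma_bound R r E.
exists M => y [z hz <-].
apply: hM => i v.
exact: lpnorm1_le1 (hz i) v.
Qed.

Lemma lpnorm_xU (R : realType) (V : finType) (U : {set V}) (p : R) :
  0 < p -> (0 < #|U|)%N -> lpnorm p (xU U (#|U|%:R `^ (- p^-1))) = 1.
Proof.
move=> p0 u0; rewrite /lpnorm.
set c := #|U|%:R `^ _.
have hc : `|c| `^ p = (#|U|%:R)^-1.
  have hp1 : p^-1 * p = 1 by field; exact: lt0r_neq0.
  rewrite ger0_norm ?powR_ge0 // /c -powRrM mulNr hp1.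
  by rewrite powR_inv1 // ler0n.
rewrite (eq_bigr (fun v => xU U (`|c| `^ p) v)); last first.
  by move=> v _; rewrite /xU; case: ifP => _ //; rewrite normr0 powR0 ?gt_eqF.
have hu1 : (#|U|%:R : R)^-1 * #|U|%:R = 1.
  by field; rewrite pnatr_eq0 -lt0n.
by rewrite sum_xU hc -[(#|U|%:R)^-1 *+ _]mulr_natr hu1 powR1.
Qed.

Lemma scale_ge1 (R : realType) (V : finType) (U : {set V}) (p : R) (r : nat) :
  0 < p -> (0 < #|U|)%N ->
  1 <= nV R V `^ (r%:R / p) * (#|U|%:R `^ (- p^-1)) ^+ r.
Proof.
move=> p0 u0.
have hu : (0 : R) < #|U|%:R by rewrite ltr0n.
rewrite -powR_mulrn ?powR_ge0 // -powRrM mulNr powRN.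
rewrite [p^-1 * _]mulrC.
have hpos : 0 < #|U|%:R `^ (r%:R / p) :> R by apply: powR_gt0.
rewrite (ler_pdivlMr _ _ hpos) mul1r.
apply: ge0_ler_powR; rewrite ?nnegrE ?ler0n //.
  by apply: mulr_ge0; rewrite ?invr_ge0 ?ler0n // ltW.
rewrite /nV ler_nat; exact: max_card.
Qed.

Lemma e_in_setT (V : finType) (E : {set {set V}}) : e_in E [set: V]%SET = #|E|.
Proof.
rewrite /e_in; have -> : [set e in E | e \subset [set: V]%SET] = E; last by [].
by apply/finset.setP => e; rewrite !finset.inE finset.subsetT andbT.
Qed.

Lemma e_in_set0 (V : finType) (r : nat) (E : {set {set V}}) :
  uniform r E -> (0 < r)%N -> e_in E finset.set0 = 0%N.
Proof.
move=> hu r0; rewrite /e_in; apply/eqP; rewrite cards_eq0; apply/eqP/setP => e.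
rewrite !finset.inE finset.subset0; apply/negbTE; apply/negP => /andP [he /eqP e0].
by have := hu e he; rewrite e0 cards0 => h; rewrite -h in r0.
Qed.

Lemma E_small (V : finType) (r : nat) (E : {set {set V}}) :
  uniform r E -> E != finset.set0 -> (r <= #|V|)%N.
Proof. by move=> hu /set0Pn [e he]; rewrite -(hu e he) max_card. Qed.

Lemma lambda2_ge0 (R : realType) (V : finType) (r : nat) (E : {set {set V}}) (p : R) :
  uniform r E -> (0 < r)%N -> 0 < p -> (0 < #|V|)%N -> 0 <= lambda2 r E p.
Proof.
move=> hu r0 p0 n0.
have u0 : (0 < #|[set: V]%SET|)%N by rewrite cardsT.
have := lambda2_ge r E p0 (lpnorm_xU p0 u0).
rewrite sigma_xU // e_in_setT cardsT /nV.
have hn : (#|V|%:R : R) ^+ r != 0 by rewrite expf_neq0 // pnatr_eq0 -lt0n.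
set c := _ `^ _.
have -> : r%:R * #|E|%:R - r%:R * #|E|%:R / #|V|%:R ^+ r * #|V|%:R ^+ r = 0 :> R.
  by field.
by rewrite mulr0.
Qed.

Lemma mu_ge0 (R : realType) (V : finType) (r : nat) (E : {set {set V}}) (p : R) :
  0 < p -> (0 < #|V|)%N -> 0 <= mu r E p.
Proof.
move=> p0 n0.
have u0 : (0 < #|[set: V]%SET|)%N by rewrite cardsT.
have := mu_ge E p0 (fun _ : 'I_r => lpnorm_xU p0 u0).
exact: le_trans (normr_ge0 _).
Qed.

Lemma per_U (R : realType) (V : finType) (r : nat) (E : {set {set V}}) (p : R)
  (U : {set V}) :
  (2 <= r)%N -> uniform r E -> 0 < p ->
  r%:R * disc R r E U - r%:R ^+ 2 * avgdeg R r E <= nV R V `^ (r%:R / p) * lambda2 r E p /\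
  r%:R * `|disc R r E U| - r%:R ^+ 2 * avgdeg R r E <= nV R V `^ (r%:R / p) * mu r E p.
Proof.
move=> hr hu p0.
have r0 : (0 < r)%N by apply: leq_trans hr.
have rR : (0 : R) < r%:R by rewrite ltr0n.
set N := nV R V `^ (r%:R / p).
have N0 : 0 <= N := powR_ge0 _ _.
have d0 : 0 <= avgdeg R r E.
  by rewrite /avgdeg; apply: divr_ge0; rewrite ?mulr_ge0 ?ler0n // /nV ler0n.
have C0 : (0 : R) <= r%:R ^+ 2 by rewrite exprn_ge0 // ler0n.
have Cd0 : 0 <= r%:R ^+ 2 * avgdeg R r E by apply: mulr_ge0.
case n0: (#|V| == 0)%N.
  have E0 : E = finset.set0.
    apply/eqP; apply: contraT => hE; have := E_small hu hE.
    by rewrite (eqP n0) leqn0 => /eqP r00; rewrite r00 in r0.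
  have disc0 : disc R r E U = 0.
    rewrite /disc /density /e_in E0 cards0 !mul0r subr0.
    have -> : [set e in (finset.set0 : {set {set V}}) | e \subset U] = finset.set0.
      by apply/finset.setP => e; rewrite !finset.inE.
    by rewrite cards0.
  have N00 : N = 0.
    rewrite /N /nV (eqP n0) powR0 //.
    by rewrite mulf_neq0 // ?invr_eq0 ?pnatr_eq0 -?lt0n // gt_eqF.
  rewrite disc0 N00 !mul0r normr0 mulr0 sub0r; split; by rewrite lerNl oppr0.
have n0' : (0 < #|V|)%N by rewrite lt0n n0.
have Ll : 0 <= N * lambda2 r E p by apply: mulr_ge0 => //; apply: lambda2_ge0.
have Lm : 0 <= N * mu r E p by apply: mulr_ge0 => //; apply: mu_ge0.
case u00: (#|U| == 0)%N.
  have U0 : U = finset.set0 by apply/eqP; rewrite -cards_eq0.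
  have disc0 : disc R r E U = 0.
    rewrite /disc U0 (e_in_set0 hu r0) cards0 bin0n.
    by case: r hr {hu r0 rR N C0 Cd0 Ll Lm d0 N0} => // r' _; rewrite mulr0 subr0.
  rewrite disc0 normr0 mulr0 sub0r; split; apply: le_trans (_ : 0 <= _) => //;
    by rewrite lerNl oppr0.
have u0 : (0 < #|U|)%N by rewrite lt0n u00.
set c := (#|U|%:R : R) `^ (- p^-1).
have hx := lpnorm_xU p0 u0.
have hs : 1 <= N * c ^+ r := scale_ge1 r p0 u0.
have hsig := sigma_xU U c hu r0.
have hl := lambda2_ge r E p0 hx.
have hm := mu_ge E p0 (fun _ : 'I_r => hx).
rewrite -/c hsig in hl hm.
set B := (X in c ^+ r * X) in hl hm.
have c0 : 0 < c by apply: powR_gt0; rewrite ltr0n.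
have k0 : 0 < c ^+ r by apply: exprn_gt0.
have LB : B <= N * lambda2 r E p.
  have P1 : N * (c ^+ r * B) <= N * lambda2 r E p := ler_wpM2l N0 hl.
  case: (leP 0 B) => hB; last by apply: le_trans Ll; apply: ltW.
  apply: le_trans P1; rewrite mulrA.
  by rewrite -[X in X <= _]mul1r; apply: ler_wpM2r.
have LM : `|B| <= N * mu r E p.
  have P1 : N * (c ^+ r * `|B|) <= N * mu r E p.
    apply: ler_wpM2l => //; rewrite -[c ^+ r]gtr0_norm // -normrM //.
  apply: le_trans P1; rewrite mulrA.
  by rewrite -[X in X <= _]mul1r; apply: ler_wpM2r.
set K := #|E|%:R / #|V|%:R ^+ r * #|U|%:R ^+ r : R.
set q := #|E|%:R / ('C(#|V|, r))%:R * ('C(#|U|, r))%:R : R.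
have [D1 D2] : q <= K /\ K - q <= r%:R ^+ 2 * (#|E|%:R / #|V|%:R).
  case E0: (E == finset.set0).
    by rewrite /q /K (eqP E0) cards0 !mul0r subr0 mulr0.
  apply: dens_bounds r0 (max_card _) (E_small hu (negbT E0)).
have eB : B = r%:R * ((e_in E U)%:R - K) by rewrite /B /K /nV; ring.
have eD : disc R r E U = (e_in E U)%:R - q by [].
have eA : avgdeg R r E = r%:R * (#|E|%:R / #|V|%:R) by rewrite /avgdeg /nV; ring.
have D1' := ler_wpM2l (ltW rR) D1.
have D2' := ler_wpM2l (ltW rR) D2.
rewrite eD eA; rewrite eB in LB LM.
have hB1 : r%:R * ((e_in E U)%:R - K) <= `|r%:R * ((e_in E U)%:R - K)| := ler_norm _.
have hB2 : - (r%:R * ((e_in E U)%:R - K)) <= `|r%:R * ((e_in E U)%:R - K)|.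
  by rewrite -normrN ler_norm.
split; first by nra.
case: (lerP 0 ((e_in E U)%:R - q)) => hdq.
  by rewrite ger0_norm //; nra.
by rewrite ltr0_norm //; nra.
Qed.

Lemma disc_set0 (R : realType) (V : finType) (r : nat) (E : {set {set V}}) :
  uniform r E -> (0 < r)%N -> disc R r E finset.set0 = 0.
Proof.
move=> hu r0; rewrite /disc (e_in_set0 hu r0) cards0 bin0n.
by case: r r0 hu => // r' _ _; rewrite mulr0 subr0.
Qed.

Theorem lemma1p9 (R : realType) (r : nat) (hr : (2 <= r)%N) :
  exists C : R, 0 < C /\
  forall (V : finType) (E : {set {set V}}), @uniform V r E ->
  forall p : R, 0 < p ->
    (@nV R V) `^ (r%:R / p) * @lambda2 R V r E p >= r%:R * @discplus R V r E - C * @avgdeg R V r E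
    /\ (@nV R V) `^ (r%:R / p) * @mu R V r E p >= r%:R * @discabs R V r E - C * @avgdeg R V r E.
Proof.
have r0 : (0 < r)%N by apply: leq_trans hr.
have rR : (0 : R) < r%:R by rewrite ltr0n.
exists (r%:R ^+ 2); split; first by rewrite exprn_gt0.
move=> V E hu p p0.
have H := fun U => per_U U hr hu p0.
have [H0l H0m] := H finset.set0.
rewrite (disc_set0 R hu r0) normr0 mulr0 in H0l H0m.
split.
  set L := _ * lambda2 r E p.
  have M : discplus R r E <= (L + r%:R ^+ 2 * avgdeg R r E) / r%:R.
    apply: bigmax_le.
      by apply: divr_ge0; [rewrite /L; lra | exact: ltW].
    move=> U _; rewrite ler_pdivlMr //.
    by have [h _] := H U; rewrite /L; lra.
  rewrite ler_pdivlMr // /L in M; rewrite /L; lra.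
set L := _ * mu r E p.
have M : discabs R r E <= (L + r%:R ^+ 2 * avgdeg R r E) / r%:R.
  apply: bigmax_le.
    by apply: divr_ge0; [rewrite /L; lra | exact: ltW].
  move=> U _; rewrite ler_pdivlMr //.
  by have [_ h] := H U; rewrite /L; lra.
rewrite ler_pdivlMr // /L in M; rewrite /L; lra.
Qed.
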